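(* Let $X,Y$ be compact metric spaces, and let $A\subseteq X$, $B\subseteq Y$ be closed subsets such that $A$ contains every isolated point of $X$ and $B$ contains every isolated point of $Y$. Let $I(X,A)$ and $I(Y,B)$ be constructed as described in the context (with arbitrary choices of the enumerations). Then every homeomorphism $g:X\to Y$ with $g[A]=B$ extends to a homeomorphism $I(X,A)\to I(Y,B)$. Conversely, if $f:I(X,A)\to I(Y,B)$ is a homeomorphism, then $f[X]=Y$ and $f[A]=B$.
   Context: For a compact metric space $X$ and a closed subset $A\subseteq X$ containing all isolated points of $X$, $I(X,A)\subseteq X\times[0,1]$ is defined as follows: let $(d_n)_{n\in\mathbb{N}}$ (with $\mathbb{N}=\{1,2,\dots\}$) enumerate, with each term repeated infinitely often, a countable dense subset of $A$; set $\widetilde{a}_n=(d_n,\tfrac1n)$ and $I(X,A)=(X\times\{0\})\cup\{\widetilde{a}_1,\widetilde{a}_2,\dots\}$. This is a compact subset of $X\times[0,1]$, and $X$ is identified with $X\times\{0\}$ (so that $f[X]$, $f[A]$ refer to these copies). $I(Y,B)$ is defined analogously from $Y,B$. *)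

(* Defs.v *)
From HB Require Import structures.
From mathcomp Require Import all_boot all_order all_algebra.
From mathcomp Require Import all_classical all_reals all_analysis.
Set Implicit Arguments. Unset Strict Implicit. Unset Printing Implicit Defensive.
Import Order.TTheory GRing.Theory Num.Theory.
Import numFieldNormedType.Exports.
Local Open Scope classical_set_scope.
Local Open Scope ring_scope.

(* An admissible enumeration of A: a sequence d (d 0, d 1, ... standing for
   d_1, d_2, ...) whose range is a countable dense subset of A and in which
   every term is repeated infinitely often. *)
Definition admissible_enum {T : topologicalType} (A : set T) (d : nat -> T) :=
  [/\ range d `<=` A,
      A `<=` closure (range d) &
      forall n N : nat, exists2 m : nat, (N <= m)%N & d m = d n].

(* I(X,A) as a subset of X * R (it lies in X * [0,1]):
   X * {0} together with the points (d_n, 1/n), n = 1, 2, ...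
   (with 0-based d : nat -> X, the n-th point is (d n, 1/(n+1))). *)
Definition Ispace {R : realType} {T : topologicalType} (d : nat -> T)
  : set (T * R) :=
  [set p | p.2 = 0] `|` range (fun n : nat => (d n, (n.+1%:R)^-1)).

Definition homeo_on {U V : topologicalType} (S : set U) (T : set V) (F : U -> V) :=
  exists G : V -> U,
    [/\ {within S, continuous F}, {within T, continuous G},
        F @` S `<=` T, G @` T `<=` S &
        (forall p, S p -> G (F p) = p) /\ (forall q, T q -> F (G q) = q)].

Definition homeomorphism {U V : topologicalType} (g : U -> V) :=
  continuous g /\ exists h : V -> U, [/\ continuous h, cancel g h & cancel h g].

(* Main.v *)
Require Import Defs.
From HB Require Import structures.
From mathcomp Require Import all_boot all_order all_algebra.
From mathcomp Require Import all_classical all_reals all_analysis.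
From mathcomp Require Import lra.
Import Order.TTheory GRing.Theory Num.Theory.
Import numFieldNormedType.Exports.
Local Open Scope classical_set_scope.
Local Open Scope ring_scope.
Lemma nat_bound (s : seq nat) : exists N, forall n, (N <= n)%N -> n \notin s.
Proof.
elim: s => [|x s [N HN]]; first by exists 0%N.
exists (maxn x.+1 N) => n; rewrite geq_max => /andP[xn Nn].
rewrite in_cons negb_or HN // andbT; apply/eqP => nx; move: xn; by rewrite nx ltnn.
Qed.

Section BF.
Variable P : nat -> nat -> nat -> Prop.
Hypothesis H1 : forall k n (K : seq nat), exists m, m \notin K /\ P k n m.
Hypothesis H2 : forall k m (K : seq nat), exists n, n \notin K /\ P k n m.
Hypothesis Hmono : forall k k' n m, (k <= k')%N -> P k' n m -> P k n m.

Definition pm k n (K : seq nat) := xget 0%N [set m | m \notin K /\ P k n m].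
Lemma pmP k n K : pm k n K \notin K /\ P k n (pm k n K).
Proof. exact: (xgetPex 0%N (H1 k n K)). Qed.
Definition pn k m (K : seq nat) := xget 0%N [set n | n \notin K /\ P k n m].
Lemma pnP k m K : pn k m K \notin K /\ P k (pn k m K) m.
Proof. exact: (xgetPex 0%N (H2 k m K)). Qed.

Definition step1 k (s : seq (nat * nat)) :=
  if k \in map fst s then s else (k, pm k k (map snd s)) :: s.
Definition step k (s : seq (nat * nat)) :=
  let s1 := step1 k s in
  if k \in map snd s1 then s1 else (pn k k (map fst s1), k) :: s1.
Fixpoint st k := if k is k'.+1 then step k' (st k') else [::].

Lemma step_suffix k s : exists t, step k s = t ++ s /\
  forall p, p \in t -> P k p.1 p.2.
Proof.
rewrite /step /step1.
have [t1 [E1 H1']] : exists t, (if k \in map fst s then s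
    else (k, pm k k (map snd s)) :: s) = t ++ s /\ forall p, p \in t -> P k p.1 p.2.
  case: ifP => _; first by exists [::].
  exists [:: (k, pm k k (map snd s))]; split => // p; rewrite inE => /eqP ->.
  exact: (pmP k k _).2.
rewrite E1; case: ifP => _; first by exists t1.
exists ((pn k k (map fst (t1 ++ s)), k) :: t1); split => // p.
rewrite inE => /orP[/eqP ->|]; last exact: H1'.
exact: (pnP k k _).2.
Qed.

Lemma step_uniq k s : uniq (map fst s) -> uniq (map snd s) ->
  uniq (map fst (step k s)) /\ uniq (map snd (step k s)).
Proof.
move=> u1 u2; rewrite /step /step1.
have [v1 v2] : uniq (map fst (if k \in map fst s then s
    else (k, pm k k (map snd s)) :: s)) /\
    uniq (map snd (if k \in map fst s then s
    else (k, pm k k (map snd s)) :: s)).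
  case: ifP => // H; rewrite /= u1 u2 H; split => //.
  by rewrite (pmP k k _).1.
case: ifP => //= H; rewrite v1 v2 H; split => //.
by rewrite (pnP k k _).1.
Qed.

Lemma st_uniq k : uniq (map fst (st k)) /\ uniq (map snd (st k)).
Proof. by elim: k => [|k [u1 u2]] //=; exact: step_uniq. Qed.

Lemma st_mem k : k \in map fst (st k.+1) /\ k \in map snd (st k.+1).
Proof.
rewrite /= /step /step1.
have Hf : k \in map fst (if k \in map fst (st k) then st k
    else (k, pm k k (map snd (st k))) :: st k).
  by case: ifP => //= _; rewrite inE eqxx.
case: ifP => H /=; first by split.
by rewrite !inE eqxx Hf orbT.
Qed.

Lemma st_mono k k' : (k <= k')%N -> exists t, st k' = t ++ st k /\
  forall p, p \in t -> P k p.1 p.2.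
Proof.
elim: k' => [|k' IH]; first by rewrite leqn0 => /eqP ->; exists [::].
rewrite leq_eqVlt => /orP[/eqP ->|]; first by exists [::].
rewrite ltnS => kk'; have [t [Et Ht]] := IH kk'.
have [t' [Et' Ht']] := step_suffix k' (st k').
exists (t' ++ t); rewrite /= Et' Et catA; split => // p.
rewrite mem_cat => /orP[/Ht' Hp|/Ht //].
exact: (Hmono _ _ _ _ kk' Hp).
Qed.

Lemma st_sub k k' p : (k <= k')%N -> p \in st k -> p \in st k'.
Proof. by move=> /st_mono [t [-> _]]; rewrite mem_cat orbC => ->. Qed.

Lemma uniq_fst (s : seq (nat * nat)) n m1 m2 : uniq (map fst s) ->
  (n, m1) \in s -> (n, m2) \in s -> m1 = m2.
Proof.
elim: s => // [[a b] s IH] /= /andP[an u]; rewrite !inE.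
move=> /orP[/eqP[] ? ?|H1'] /orP[/eqP[] ? ?|H2']; subst => //.
- by case/negP: an; exact: (map_f fst H2').
- by case/negP: an; exact: (map_f fst H1').
- exact: IH.
Qed.

Lemma uniq_snd (s : seq (nat * nat)) m n1 n2 : uniq (map snd s) ->
  (n1, m) \in s -> (n2, m) \in s -> n1 = n2.
Proof.
elim: s => // [[a b] s IH] /= /andP[an u]; rewrite !inE.
move=> /orP[/eqP[] ? ?|H1'] /orP[/eqP[] ? ?|H2']; subst => //.
- by case/negP: an; exact: (map_f snd H2').
- by case/negP: an; exact: (map_f snd H1').
- exact: IH.
Qed.

Definition bsig n := (nth (0,0)%N (st n.+1) (find (fun p => p.1 == n) (st n.+1))).2.
Definition btau m := (nth (0,0)%N (st m.+1) (find (fun p => p.2 == m) (st m.+1))).1.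

Lemma bsigP n : (n, bsig n) \in st n.+1.
Proof.
have /mapP [q qin qn] := (st_mem n).1.
have hs : has (fun p => p.1 == n) (st n.+1) by apply/hasP; exists q => //; rewrite qn.
have hf : (find (fun p => p.1 == n) (st n.+1) < size (st n.+1))%N by rewrite -has_find.
have := mem_nth (0,0)%N hf; have := nth_find (0,0)%N hs; rewrite /bsig.
by case: (nth _ _ _) => a b /= /eqP ->.
Qed.

Lemma btauP m : (btau m, m) \in st m.+1.
Proof.
have /mapP [q qin qn] := (st_mem m).2.
have hs : has (fun p => p.2 == m) (st m.+1) by apply/hasP; exists q => //; rewrite qn.
have hf : (find (fun p => p.2 == m) (st m.+1) < size (st m.+1))%N by rewrite -has_find.
have := mem_nth (0,0)%N hf; have := nth_find (0,0)%N hs; rewrite /btau.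
by case: (nth _ _ _) => a b /= /eqP ->.
Qed.

Lemma in_st_same {k k' p q} : p \in st k -> q \in st k' ->
  exists K, p \in st K /\ q \in st K /\ uniq (map fst (st K)) /\ uniq (map snd (st K)).
Proof.
move=> hp hq; exists (maxn k k'); split; first by apply: (st_sub _ _ _ _ hp); rewrite leq_maxl.
split; first by apply: (st_sub _ _ _ _ hq); rewrite leq_maxr.
exact: st_uniq.
Qed.

Lemma bsigK : cancel bsig btau.
Proof.
move=> n; have [K [h1 [h2 [_ u]]]] := in_st_same (bsigP n) (btauP (bsig n)).
exact: (uniq_snd _ _ _ _ u h2 h1).
Qed.

Lemma btauK : cancel btau bsig.
Proof.
move=> m; have [K [h1 [h2 [u _]]]] := in_st_same (btauP m) (bsigP (btau m)).
exact: (uniq_fst _ _ _ _ u h2 h1).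
Qed.

Lemma bsig_approx k : exists N, forall n, (N <= n)%N -> P k n (bsig n) /\ P k (btau n) n.
Proof.
have [N HN] := nat_bound (map fst (st k) ++ map snd (st k)).
exists N => n Nn; have := HN n Nn; rewrite mem_cat negb_or => /andP[n1 n2].
split.
- have [t [Et Ht]] := @st_mono k (maxn k n.+1) (leq_maxl _ _).
  have := st_sub _ _ _ (leq_maxr k n.+1) (bsigP n); rewrite Et mem_cat => /orP[/Ht //|h].
  by case/negP: n1; exact: (map_f fst h).
- have [t [Et Ht]] := @st_mono k (maxn k n.+1) (leq_maxl _ _).
  have := st_sub _ _ _ (leq_maxr k n.+1) (btauP n); rewrite Et mem_cat => /orP[/Ht //|h].
  by case/negP: n2; exact: (map_f snd h).
Qed.

End BF.

Lemma back_forth (P : nat -> nat -> nat -> Prop) :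
  (forall k n (K : seq nat), exists m, m \notin K /\ P k n m) ->
  (forall k m (K : seq nat), exists n, n \notin K /\ P k n m) ->
  (forall k k' n m, (k <= k')%N -> P k' n m -> P k n m) ->
  exists sg tu : nat -> nat, [/\ cancel sg tu, cancel tu sg &
    forall k, exists N, forall n, (N <= n)%N -> P k n (sg n) /\ P k (tu n) n].
Proof.
move=> H1 H2 Hm; exists (bsig P), (btau P); split.
- exact: bsigK.
- exact: btauK.
- exact: bsig_approx.
Qed.

Section Isp.
Variable R : realType.

Lemma ballxx' (M : pseudoMetricType R) (x : M) (e : R) : 0 < e -> ball x e x.
Proof. by move=> e0; exact: (ball_center x (PosNum e0)). Qed.

Lemma ballR (x y e : R) : ball x e y <-> `|x - y| < e.
Proof. by rewrite -ball_normE. Qed.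

Lemma invS_lt (e : R) : 0 < e ->
  exists N : nat, forall n, (N <= n)%N -> n.+1%:R^-1 < e.
Proof.
move=> e0; exists (Num.trunc (e^-1)) => n Nn.
rewrite invf_plt ?posrE ?ltr0n //.
apply: (lt_le_trans (truncnS_gt _)); by rewrite ler_nat ltnS.
Qed.

Lemma invS_neq0 n : (n.+1%:R^-1 : R) <> 0.
Proof. by apply/eqP; rewrite invr_eq0 pnatr_eq0. Qed.

Lemma invS_gt0 n : 0 < (n.+1%:R^-1 : R).
Proof. by rewrite invr_gt0 ltr0n. Qed.

Lemma invS_inj n m : (n.+1%:R^-1 : R) = m.+1%:R^-1 -> n = m.
Proof. by move/invr_inj/eqP; rewrite eqr_nat => /eqP []. Qed.

Definition idx (r : R) : nat := (Num.trunc (r^-1)).-1.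
Lemma idxK n : idx (n.+1%:R^-1) = n.
Proof. by rewrite /idx invrK (@truncn_def _ _ n.+1) // lexx ltr_nat ltnSn. Qed.

Variable X : metricType R.
Variable dA : nat -> X.
Local Notation S := (Ispace (R:=R) dA).
Local Notation pt n := (dA n, (n.+1%:R^-1 : R)).

Lemma Ispace_cases q : S q -> q.2 = 0 \/ exists n, q = pt n.
Proof. by case=> [h|[n _ <-]]; [left|right; exists n]. Qed.

Lemma neq_near (p a : X * R) : a <> p -> \forall q \near p, q <> a.
Proof.
move=> ap; have [h1|h1] := eqVneq a.1 p.1.
- have h2 : a.2 != p.2.
    apply/eqP => h2; apply: ap; move: h1 h2; case: a; case: p => /= ? ? ? ? -> -> //.
  have e0 : 0 < `|p.2 - a.2| by rewrite normr_gt0 subr_eq0 eq_sym.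
  apply: (filterS _ (nbhsx_ballx p _ e0)) => q [_ hq] qa.
  by move: hq; rewrite qa ballR ltxx.
- have e0 : 0 < mdist p.1 a.1 by rewrite mdist_gt0 eq_sym.
  apply: (filterS _ (nbhsx_ballx p _ e0)) => q [hq _] qa.
  by move: hq; rewrite qa ballEmdist /= ltxx.
Qed.

Lemma L1 N (p : X * R) : \forall q \near p, S q ->
  [\/ q = p, q.2 = 0 | exists2 n, (N <= n)%N & q = pt n].
Proof.
elim: N => [|N IH].
  apply: filterE => q /Ispace_cases [h|[n ->]]; first by apply: Or32.
  by apply: Or33; exists n.
have H' : \forall q \near p, pt N = p \/ q <> pt N.
  have [e|e] := pselect (pt N = p); first by apply: filterE => q; left.
  by apply: (filterS _ (neq_near _ _ e)) => q; right.
apply: (filterS2 _ _ IH H') => q h1 [e|ne] Sq; case: (h1 Sq) => [->|->|[n Nn qe]];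
  try by [apply: Or31|apply: Or32].
- rewrite qe; have [->|nN] := eqVneq n N; first by apply: Or31.
  by apply: Or33; exists n => //; rewrite ltn_neqAle eq_sym nN.
- rewrite qe; have [nN|nN] := eqVneq n N; first by exfalso; apply: ne; rewrite qe nN.
  by apply: Or33; exists n => //; rewrite ltn_neqAle eq_sym nN.
Qed.


Lemma L2 (p : X * R) : p.2 != 0 -> \forall q \near p, S q -> q = p.
Proof.
move=> p0; have e0 : 0 < `|p.2| / 2 by rewrite divr_gt0 ?normr_gt0.
have [N HN] := invS_lt _ e0.
apply: (filterS2 _ _ (L1 N p) (nbhsx_ballx p _ e0)) => q h [_ hb] Sq.
have a0 : 0 < `|p.2| by rewrite normr_gt0.
case: (h Sq) => [//|q0|[n Nn qe]].
- move: hb; rewrite ballR q0 subr0 => hb.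
  have hh : forall a : R, a < a / 2 -> 0 < a -> False by move=> a; lra.
  by exfalso; exact: (hh _ hb a0).
- move: hb; rewrite qe /= ballR => hb; have := HN n Nn.
  have := ler_normD (p.2 - n.+1%:R^-1) n.+1%:R^-1.
  rewrite subrK (gtr0_norm (invS_gt0 n)) => h1 h2.
  have := le_lt_trans h1 (ltrD hb h2); by rewrite -splitr ltxx.
Qed.

Variable A : set X.
Hypothesis clA : closed A.
Hypothesis isoA : isolated [set: X] `<=` A.
Hypothesis admA : admissible_enum A dA.

Lemma LIM a : A a -> forall U, nbhs (a, 0) U -> exists q, S q /\ q.2 <> 0 /\ U q.
Proof.
move=> Aa U /nbhs_ballP [e e0 hU].
case: admA => _ hcl hrep.
have [x [[n0 _ <-] hx]] := hcl a Aa _ (nbhsx_ballx a _ e0).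
have [N HN] := invS_lt _ e0.
have [m Nm em] := hrep n0 N.
exists (pt m); split; first by right; exists m.
split; first exact: invS_neq0.
apply: hU; split => /=; first by rewrite em.
rewrite ballR sub0r normrN gtr0_norm ?invS_gt0 //; exact: HN.
Qed.

Lemma NI (p : X * R) : p.2 = 0 -> forall U, nbhs p U -> exists q, S q /\ q <> p /\ U q.
Proof.
move=> p0 U hU; have := hU; move=> /nbhs_ballP [e e0 hb].
have [[x [xp bx]]|nx] := pselect (exists x, x <> p.1 /\ ball p.1 e x).
  exists (x, 0); split; first by left.
  split; first by move=> h; apply: xp; rewrite -h.
  by apply: hb; split => //=; rewrite p0; exact: ballxx'.
have Ap : A p.1.
  apply: isoA; split; first by rewrite inE.
  exists (ball p.1 e); first exact: nbhsx_ballx.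
  rewrite setIT; apply/seteqP; split => y /=; last by move=> ->; exact: ballxx'.
  by move=> hy; apply: contrapT => yp; apply: nx; exists y.
have pe : p = (p.1, 0) by case: p p0 {hU hb nx Ap} => ? ? /= ->.
rewrite pe in hU; have [q [Sq [q0 Uq]]] := LIM _ Ap _ hU.
by exists q; split => //; split => // qp; apply: q0; rewrite qp.
Qed.

Lemma LIM' (p : X * R) : p.2 = 0 -> (forall U, nbhs p U -> exists q, S q /\ q.2 <> 0 /\ U q) ->
  A p.1.
Proof.
move=> p0 H; rewrite (closure_id A).1 //.
case: admA => hr _ _.
apply: (closureS hr) => V /nbhs_ballP [e e0 hV].
have [q [Sq [q0 [hq1 hq2]]]] := H _ (nbhsx_ballx p _ e0).
case: (Ispace_cases _ Sq) => [//|[n qe]].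
exists (dA n); split; first by exists n.
by apply: hV; move: hq1; rewrite qe.
Qed.


Definition Fmap {Y : Type} (g : X -> Y) (sg : nat -> nat) (dB : nat -> Y)
  (p : X * R) : Y * R :=
  if p.2 == 0 then (g p.1, 0) else (dB (sg (idx p.2)), (sg (idx p.2)).+1%:R^-1).

Lemma Fmap_pt {Y : Type} (g : X -> Y) (sg : nat -> nat) (dB : nat -> Y) n : Fmap g sg dB (pt n) = (dB (sg n), (sg n).+1%:R^-1).
Proof.
have h : (n.+1%:R^-1 : R) == 0 = false by apply/eqP; exact: invS_neq0.
by rewrite /Fmap /= h idxK.
Qed.

Lemma Fmap0 {Y : Type} (g : X -> Y) (sg : nat -> nat) (dB : nat -> Y) x : Fmap g sg dB (x, 0) = (g x, 0).
Proof. by rewrite /Fmap /= eqxx. Qed.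

Lemma Fmap_cont (Y : metricType R) (dB : nat -> Y) (g : X -> Y) (sg : nat -> nat) :
  continuous g -> (forall M, exists N, forall n, (N <= n)%N -> (M <= sg n)%N) ->
  (forall e, 0 < e -> exists N, forall n, (N <= n)%N -> ball (g (dA n)) e (dB (sg n))) ->
  {within S, continuous (Fmap g sg dB)}.
Proof.
move=> cg hsg happ; apply/subspace_continuousP => -[x r] Sp W HW.
have [r0|r0] := eqVneq r 0; last first.
  apply: (filterS _ (L2 (x, r) r0)) => q h Sq; rewrite (h Sq).
  exact: nbhs_singleton HW.
subst r; move: HW; rewrite /from_subspace Fmap0 => /nbhs_ballP [e e0 hb].
have e2 : 0 < e / 2 by rewrite divr_gt0.
have hh : forall a : R, 0 < a -> a / 2 <= a by move=> a; lra.
have e2e : e / 2 <= e by exact: hh.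
have /nbhs_ballP [d d0 hd] := cg x _ (nbhsx_ballx (g x) _ e2).
have [N1 hN1] := happ _ e2.
have [M hM] := invS_lt _ e0.
have [N2 hN2] := hsg M.
apply: (filterS2 _ _ (L1 (maxn N1 N2) (x, 0)) (nbhsx_ballx (x, 0) _ d0)).
move=> [y s] h [/= bq1 bq2] Sq; rewrite /from_subspace.
case: (h Sq) => [->|/= q0|[n Nn qe]].
- rewrite Fmap0; apply: hb; split; exact: ballxx'.
- rewrite q0 Fmap0; apply: hb; split => /=; last exact: ballxx'.
  exact: (le_ball e2e (hd _ bq1)).
- case: qe => ? ?; subst y s; rewrite Fmap_pt; apply: hb; split => /=.
  + rewrite (splitr e); apply: (@ball_triangle _ _ (g (dA n))).
      exact: (hd _ bq1).
    by apply: hN1; apply: leq_trans Nn; apply: leq_maxl.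
  + rewrite ballR sub0r normrN gtr0_norm ?invS_gt0 //.
    by apply: hM; apply: hN2; apply: leq_trans Nn; apply: leq_maxr.
Qed.

End Isp.

Arguments Fmap {R X Y} g sg dB p.
Arguments Fmap0 {R X Y g sg dB x}.
Arguments Fmap_pt {R X dA Y g sg dB n}.
Arguments Fmap_cont {R X dA Y dB g sg}.
Arguments Ispace_cases {R X dA q}.
Arguments NI {R X dA A} isoA admA {p}.
Arguments LIM {R X dA A} admA {a}.
Arguments LIM' {R X dA A} clA admA {p}.
Arguments L2 {R X} dA {p}.

Section Final.
Variable R : realType.

Lemma pres {U V : topologicalType} (S : set U) (T : set V) (F : U -> V)
  (P : U -> Prop) (Q : V -> Prop) p :
  {within S, continuous F} -> S p -> (forall q, S q -> P q -> Q (F q)) ->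
  F @` S `<=` T ->
  (forall W, nbhs p W -> exists q, S q /\ P q /\ W q) ->
  forall W, nbhs (F p) W -> exists q', T q' /\ Q q' /\ W q'.
Proof.
move=> cF Sp hPQ hST H W hW.
have hn := (subspace_continuousP S F).1 cF p Sp W hW.
have [q [Sq [Pq hq]]] := H _ hn.
exists (F q); split; first by apply: hST; exists q.
by split; [exact: hPQ | exact: hq].
Qed.

Arguments pres {U V S T F P Q p}.

Lemma zero_pres (X Y : metricType R) (A : set X) (dA : nat -> X) (dB : nat -> Y)
  (F : X * R -> Y * R) (G : Y * R -> X * R) :
  isolated [set: X] `<=` A -> admissible_enum A dA ->
  {within Ispace (R:=R) dA, continuous F} ->
  (forall p, Ispace (R:=R) dA p -> G (F p) = p) ->
  F @` Ispace (R:=R) dA `<=` Ispace (R:=R) dB ->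
  forall p, p.2 = 0 -> (F p).2 = 0.
Proof.
move=> isoA admA cF GF hST p p0; apply: contrapT => /eqP Fp0.
have Sp : Ispace (R:=R) dA p by left.
have hPQ : forall q, Ispace (R:=R) dA q -> q <> p -> F q <> F p.
  by move=> q Sq qp Fq; apply: qp; rewrite -(GF q Sq) Fq GF.
have [q' [Tq' [qF hW]]] := @pres _ _ _ _ F (fun q => q <> p) (fun q' => q' <> F p) p cF Sp hPQ hST (NI isoA admA p0) _ (L2 dB Fp0).
exact: qF (hW Tq').
Qed.

Lemma exists_close (X Y : metricType R) (B : set Y) (dB : nat -> Y)
  (h : Y -> X) :
  continuous h -> admissible_enum B dB ->
  forall b e (K : seq nat), B b -> 0 < e ->
  exists m, m \notin K /\ ball b e (dB m) /\ ball (h b) e (h (dB m)).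
Proof.
move=> ch [_ hcl hrep] b e K Bb e0.
have hn : nbhs b (ball b e `&` h @^-1` ball (h b) e).
  apply: filterI; first exact: nbhsx_ballx.
  exact: (ch b _ (nbhsx_ballx (h b) _ e0)).
have [x [[m0 _ <-] [h1 h2]]] := hcl b Bb _ hn.
have [N HN] := nat_bound K.
have [m Nm em] := hrep m0 N.
by exists m; rewrite em; split => //; exact: HN.
Qed.

Lemma sg_large (sg tu : nat -> nat) : cancel tu sg -> cancel sg tu ->
  forall M, exists N, forall n, (N <= n)%N -> (M <= sg n)%N.
Proof.
move=> tK sK M; have [N HN] := nat_bound (map tu (iota 0 M)).
exists N => n Nn; rewrite leqNgt; apply/negP => sM.
have hin : sg n \in iota 0 M by rewrite mem_iota add0n sM.
by have := HN n Nn; rewrite -{1}(sK n) (map_f tu hin).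
Qed.

End Final.

Arguments exists_close {R X Y B dB h}.
Arguments zero_pres {R X Y A dA dB F G}.

Theorem proposition2 (R : realType) (X Y : metricType R)
  (A : set X) (B : set Y) (dA : nat -> X) (dB : nat -> Y) :
  compact [set: X] -> compact [set: Y] ->
  closed A -> closed B ->
  isolated [set: X] `<=` A -> isolated [set: Y] `<=` B ->
  admissible_enum A dA -> admissible_enum B dB ->
  (forall g : X -> Y, homeomorphism g -> g @` A = B ->
     exists F : X * R -> Y * R,
       homeo_on (Ispace (R:=R) dA) (Ispace (R:=R) dB) F /\
       forall x : X, F (x, 0) = (g x, 0))
  /\
  (forall f : X * R -> Y * R,
     homeo_on (Ispace (R:=R) dA) (Ispace (R:=R) dB) f ->
     f @` [set p : X * R | p.2 = 0] = [set q : Y * R | q.2 = 0] /\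
     f @` (A `*` [set 0]) = B `*` [set 0]).
Proof.
move=> _ _ clA clB isoA isoB admA admB; split.
- move=> g [cg [h [ch gK hK]]] gA.
  pose P k n m := ball (g (dA n)) (k.+1%:R^-1 : R) (dB m) /\
                  ball (h (dB m)) (k.+1%:R^-1 : R) (dA n).
  have H1 : forall k n (K : seq nat), exists m, m \notin K /\ P k n m.
    move=> k n K.
    have Bb : B (g (dA n)).
      by rewrite -gA; exists (dA n) => //; case: admA => hr _ _; apply: hr; exists n.
    have [m [mK [b1 b2]]] := exists_close ch admB _ _ K Bb (invS_gt0 R k).
    exists m; split => //; split => //; apply: ball_sym; by rewrite gK in b2.
  have H2 : forall k m (K : seq nat), exists n, n \notin K /\ P k n m.
    move=> k m K.
    have Ab : A (h (dB m)).
      have : B (dB m) by case: admB => hr _ _; apply: hr; exists m.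
      by rewrite -gA => -[a Aa <-]; rewrite gK.
    have [n [nK [b1 b2]]] := exists_close cg admA _ _ K Ab (invS_gt0 R k).
    exists n; split => //; split => //; apply: ball_sym; by rewrite hK in b2.
  have Hm : forall k k' n m, (k <= k')%N -> P k' n m -> P k n m.
    move=> k k' n m kk' [b1 b2].
    have le : (k'.+1%:R^-1 : R) <= k.+1%:R^-1.
      by rewrite lef_pV2 ?posrE ?ltr0n // ler_nat ltnS.
    by split; apply: (le_ball le).
  have [sg [tu [sK tK happ]]] := back_forth P H1 H2 Hm.
  exists (Fmap g sg dB); split; last by move=> x; rewrite Fmap0.
  exists (Fmap h tu dA); split.
  + apply: Fmap_cont => //; first exact: sg_large.
    move=> e e0; have [k hk] := invS_lt _ _ e0; have [N HN] := happ k.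
    exists N => n Nn; apply: (le_ball (ltW (hk k (leqnn k)))).
    exact: (HN n Nn).1.1.
  + apply: Fmap_cont => //; first exact: sg_large.
    move=> e e0; have [k hk] := invS_lt _ _ e0; have [N HN] := happ k.
    exists N => n Nn; apply: (le_ball (ltW (hk k (leqnn k)))).
    exact: (HN n Nn).2.2.
  + move=> _ [p Sp <-]; case: (Ispace_cases Sp) => [p0|[n ->]].
      by case: p {Sp} p0 => x r /= ->; rewrite Fmap0; left.
    by rewrite Fmap_pt; right; exists (sg n).
  + move=> _ [p Sp <-]; case: (Ispace_cases Sp) => [p0|[n ->]].
      by case: p {Sp} p0 => x r /= ->; rewrite Fmap0; left.
    by rewrite Fmap_pt; right; exists (tu n).
  + split.
    * move=> p Sp; case: (Ispace_cases Sp) => [p0|[n ->]].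
        by case: p {Sp} p0 => x r /= ->; rewrite !Fmap0 gK.
      by rewrite !Fmap_pt sK.
    * move=> p Sp; case: (Ispace_cases Sp) => [p0|[n ->]].
        by case: p {Sp} p0 => x r /= ->; rewrite !Fmap0 hK.
      by rewrite !Fmap_pt tK.
- move=> f [G [cf cG fST GTS [GF FG]]].
  have zF := zero_pres isoA admA cf GF fST.
  have zG := zero_pres isoB admB cG FG GTS.
  have hF : forall q, Ispace (R:=R) dA q -> q.2 <> 0 -> (f q).2 <> 0.
    by move=> q Sq q0 fq0; apply: q0; rewrite -(GF q Sq); exact: zG.
  have hG : forall q, Ispace (R:=R) dB q -> q.2 <> 0 -> (G q).2 <> 0.
    by move=> q Sq q0 fq0; apply: q0; rewrite -(FG q Sq); exact: zF.
  split.
  + apply/seteqP; split.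
      by move=> _ [p p0 <-]; exact: zF.
    move=> q q0; exists (G q); first exact: zG.
    by apply: FG; left.
  + apply/seteqP; split.
    * move=> _ [[a r] [/= Aa r0] <-]; subst r.
      have Sp : Ispace (R:=R) dA (a, 0) by left.
      have T1 : (f (a, 0)).2 = 0 by exact: zF.
      split; last by rewrite /= T1.
      apply: (LIM' clB admB T1).
      exact: (@pres _ _ _ _ f (fun q => q.2 <> 0) (fun q => q.2 <> 0) _ cf Sp hF fST (LIM admA Aa)).
    * move=> [b r] [/= Bb r0]; subst r.
      have Sq : Ispace (R:=R) dB (b, 0) by left.
      have T1 : (G (b, 0)).2 = 0 by exact: zG.
      exists (G (b, 0)); last by apply: FG.
      have -> : G (b, 0) = ((G (b, 0)).1, 0) by case: (G (b, 0)) T1 => ? ? /= ->.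
      split => //; apply: (LIM' clA admA T1).
      exact: (@pres _ _ _ _ G (fun q => q.2 <> 0) (fun q => q.2 <> 0) _ cG Sq hG GTS (LIM admB Bb)).
Qed.
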